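(* Let $T$ be the $H_3(\mathbb R)$-odometer associated with a nested sequence $\Gamma_1\supset\Gamma_2\supset\cdots$ of lattices in $H_3(\mathbb R)$ such that each $\Gamma_n$ is normal in $\Gamma_1$. If $T$ is free, then $\bigcap_{n=1}^\infty p(\Gamma_n)=\{0\}$.
   Context: $H_3(\mathbb R)$: real $3\times3$ upper triangular unipotent matrices; for $g$ with $(1,2)$ entry $t_1$ and $(2,3)$ entry $t_2$, $p(g)=(t_1,t_2)\in\mathbb R^2$. A lattice is a discrete subgroup of finite covolume. The odometer is the left-translation action on $\varprojlim H_3(\mathbb R)/\Gamma_j$ with the inverse limit of the invariant probabilities. Free: a.e. point has trivial stability group. *)

(* Defs.v *)
From HB Require Import structures.
From mathcomp Require Import all_boot all_order all_algebra.
From mathcomp Require Import all_classical all_reals all_analysis.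
Import Order.TTheory GRing.Theory Num.Theory.
Import numFieldNormedType.Exports numFieldTopology.Exports.

Set Implicit Arguments.
Unset Strict Implicit.
Unset Printing Implicit Defensive.

Local Open Scope classical_set_scope.
Local Open Scope ring_scope.

(* The real Heisenberg group H_3(R): the unipotent upper triangular matrix
   [[1, a, c], [0, 1, b], [0, 0, 1]] is encoded by the triple ((a, b), c),
   i.e. a = (1,2) entry, b = (2,3) entry, c = (1,3) entry. *)
Definition H3 (R : realType) := (R * R * R)%type.

Section Heisenberg.
Variable R : realType.

Definition hmul (g h : H3 R) : H3 R :=
  (g.1.1 + h.1.1, g.1.2 + h.1.2, g.2 + h.2 + g.1.1 * h.1.2).
Definition hinv (g : H3 R) : H3 R :=
  (- g.1.1, - g.1.2, g.1.1 * g.1.2 - g.2).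
Definition hone : H3 R := (0, 0, 0).

Definition hp (g : H3 R) : R * R := (g.1.1, g.1.2).

Definition is_subgroup (G : set (H3 R)) :=
  [/\ G hone, (forall x y, G x -> G y -> G (hmul x y))
    & (forall x, G x -> G (hinv x))].

Definition discrete_subgroup (G : set (H3 R)) :=
  is_subgroup G /\ exists U : set (H3 R), nbhs hone U /\ G `&` U `<=` [set hone].

(* Haar measure of H_3(R): Lebesgue measure in the coordinates (a, b, c)
   (it is both left and right invariant). *)
Definition haar3 : set (H3 R) -> \bar R :=
  ((lebesgue_measure \x lebesgue_measure) \x (@lebesgue_measure R))%E.

Definition fundamental_domain (G F : set (H3 R)) :=
  measurable F /\
  forall g, exists! fy : H3 R * H3 R, [/\ F fy.1, G fy.2 & g = hmul fy.1 fy.2].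

Definition lattice (G : set (H3 R)) :=
  discrete_subgroup G /\
  exists F, fundamental_domain G F /\ (haar3 F < +oo)%E.

Definition normal_in (N G : set (H3 R)) :=
  forall g n, G g -> N n -> N (hmul (hmul g n) (hinv g)).

Definition lmul (g : H3 R) (A : set (H3 R)) : set (H3 R) := [set hmul g y | y in A].
Definition lcoset (g : H3 R) (G : set (H3 R)) : set (H3 R) := lmul g G.
Definition is_coset (G : set (H3 R)) (C : set (H3 R)) := exists g, C = lcoset g G.

(* Borel subsets of H_3(R)/G (quotient sigma-algebra): sets A of left cosets
   whose preimage under g |-> gG is Borel in H_3(R). *)
Definition quot_measurable (G : set (H3 R)) (A : set (set (H3 R))) :=
  A `<=` is_coset G /\ measurable [set g | A (lcoset g G)].

(* Odometer: points of lim H_3(R)/Gam_j are sequences (x_j) of left cosets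
   x_j in H_3(R)/Gam_j, compatible with the projections
   H_3(R)/Gam_{j+1} -> H_3(R)/Gam_j (i.e. x_{j+1} is contained in x_j). *)
Definition odo_pt (Gam : nat -> set (H3 R)) (x : nat -> set (H3 R)) :=
  (forall j, is_coset (Gam j) (x j)) /\ (forall j, x j.+1 `<=` x j).

Definition odo_cyl (Gam : nat -> set (H3 R)) (j : nat) (A : set (set (H3 R))) :
  set (nat -> set (H3 R)) := odo_pt Gam `&` [set x | A (x j)].

Definition odo_gen (Gam : nat -> set (H3 R)) : set (set (nat -> set (H3 R))) :=
  [set S | exists j A, quot_measurable (Gam j) A /\ S = odo_cyl Gam j A].

Definition odo_type (Gam : nat -> set (H3 R)) := g_sigma_algebraType (odo_gen Gam).

Definition odo_act (g : H3 R) (x : nat -> set (H3 R)) : nat -> set (H3 R) :=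
  fun j => lmul g (x j).

(* mu is the inverse limit of the invariant probabilities: a probability
   concentrated on the odometer whose marginal on each H_3(R)/Gam_j is
   invariant under left translation. *)
Definition odometer_measure (Gam : nat -> set (H3 R))
  (mu : probability (odo_type Gam) R) :=
  mu (odo_pt Gam) = 1%E /\
  forall j A g, quot_measurable (Gam j) A ->
    mu (odo_cyl Gam j A) = mu (odo_cyl Gam j [set lmul g C | C in A]).

Definition odo_free (Gam : nat -> set (H3 R)) (mu : probability (odo_type Gam) R) :=
  {ae mu, forall x : odo_type Gam, odo_pt Gam x ->
     forall g, odo_act g x = x -> g = hone}.

End Heisenberg.

(* Main.v *)
Require Import Defs.
From HB Require Import structures.
From mathcomp Require Import all_boot all_order all_algebra.
From mathcomp Require Import all_classical all_reals all_analysis.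
From mathcomp Require Import measurable_realfun.
From mathcomp Require Import ring lra.
Import Order.TTheory GRing.Theory Num.Theory.
Import numFieldNormedType.Exports numFieldTopology.Exports.
Local Open Scope classical_set_scope.
Local Open Scope ring_scope.

Section Aux.
Variable R : realType.
Implicit Types g h k : H3 R.

Lemma hmul_one g : hmul g (hone R) = g.
Proof. case: g => [[x y] z]; rewrite /hmul /hone /=; congr (_,_,_); ring. Qed.

Lemma hmulA g h k : hmul (hmul g h) k = hmul g (hmul h k).
Proof.
case: g => [[x y] z]; case: h => [[x' y'] z']; case: k => [[u v] w].
rewrite /hmul /=; congr (_,_,_); ring.
Qed.

Lemma hmul_invK g h : hmul g (hmul (hinv g) h) = h.
Proof.
case: g => [[x y] z]; case: h => [[u v] w].
rewrite /hmul /hinv /=; congr (_,_,_); ring.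
Qed.

Definition phi (a b : R) g := g.1.1 * b - a * g.1.2.

Lemma phiM a b g h : phi a b (hmul g h) = phi a b g + phi a b h.
Proof. rewrite /phi /hmul /=; ring. Qed.

Lemma lmul_lcoset g h (G : set (H3 R)) : lmul g (lcoset h G) = lcoset (hmul g h) G.
Proof.
rewrite /lcoset /lmul; apply/seteqP; split => x /=.
- by move=> [y [z Gz <-] <-]; exists z => //; rewrite hmulA.
- move=> [z Gz <-]; exists (hmul h z); first by exists z.
  by rewrite hmulA.
Qed.

Lemma lcoset_in (G : set (H3 R)) g : is_subgroup G -> G g -> lcoset g G = G.
Proof.
move=> [G1 GM GI] Gg; apply/seteqP; split => x /=.
- by move=> [y Gy <-]; exact: GM.
- move=> Gx; exists (hmul (hinv g) x); first by apply: GM => //; exact: GI.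
  exact: hmul_invK.
Qed.

Lemma comm_elt g d : hp g = (g.1.1, g.1.2) ->
  hmul (hmul (hmul d g) (hinv d)) (hinv g) = (0, 0, phi g.1.1 g.1.2 d).
Proof.
move=> _; case: g => [[x y] z]; case: d => [[u v] w].
rewrite /hmul /hinv /phi /=; congr (_,_,_); ring.
Qed.

Lemma central_comm g z : hmul ((0, 0, z) : H3 R) g = hmul g (0, 0, z).
Proof. case: g => [[x y] w]; rewrite /hmul /=; congr (_,_,_); ring. Qed.

Lemma odo_pt_meas (Gam : nat -> set (H3 R)) :
  measurable (odo_pt Gam : set (odo_type Gam)).
Proof.
have -> : odo_pt Gam = odo_cyl Gam 0 (is_coset (Gam 0%N)).
  apply/seteqP; split => x /=; last by case.
  by move=> ox; split => //; exact: ox.1.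
apply: sub_sigma_algebra; exists 0%N, (is_coset (Gam 0%N)); split => //.
split => //.
have -> : [set g | is_coset (Gam 0%N) (lcoset g (Gam 0%N))] = setT.
  by apply/seteqP; split => // g _; exists g.
exact: measurableT.
Qed.

Lemma final_contra (Gam : nat -> set (H3 R)) (mu : probability (odo_type Gam) R) :
  odometer_measure mu -> mu.-negligible (odo_pt Gam) -> False.
Proof.
move=> [H1 _] /(negligibleP _ (odo_pt_meas Gam)).
move=> h0; move: H1; rewrite h0 => -[] /eqP; by rewrite eq_sym oner_eq0.
Qed.

Lemma caseA (Gam : nat -> set (H3 R)) (mu : probability (odo_type Gam) R) z :
  (forall n, is_subgroup (Gam n)) -> (forall n, Gam n (0, 0, z)) -> z != 0 ->
  odo_free mu -> mu.-negligible (odo_pt Gam).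
Proof.
move=> sub hz z0 Hfree; apply: negligibleS Hfree => x ox /= HP.
have : odo_act (0, 0, z) x = x.
  apply: funext => j; have [h xj] := ox.1 j.
  rewrite /odo_act /= xj lmul_lcoset central_comm -lmul_lcoset.
  by rewrite (@lcoset_in (Gam j) _ (sub j) (hz j)).
move=> /(HP ox) [] /eqP; by rewrite (negbTE z0).
Qed.


Lemma lcoset_self (G : set (H3 R)) g : G (hone R) -> lcoset g G g.
Proof. by move=> G1; exists (hone R) => //; exact: hmul_one. Qed.

Lemma lcoset_phi (G : set (H3 R)) a b g g' :
  (forall y, G y -> phi a b y = 0) -> G (hone R) ->
  lcoset g G = lcoset g' G -> phi a b g = phi a b g'.
Proof.
move=> ker G1 e; have : lcoset g' G g by rewrite -e; exact: lcoset_self.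
by move=> [y Gy <-]; rewrite phiM (ker _ Gy) addr0.
Qed.

Section CaseB.
Variables (Gam : nat -> set (H3 R)) (a b : R).
Hypothesis sub0 : is_subgroup (Gam 0%N).
Hypothesis ab0 : a ^+ 2 + b ^+ 2 != 0.
Hypothesis ker : forall d, Gam 0%N d -> phi a b d = 0.

Let G := Gam 0%N.
Let I (t : R) := [set g : H3 R | t <= phi a b g < t + 1].
Let A (t : R) := [set lcoset g G | g in I t].
Let P (t : R) := odo_cyl Gam 0 (A t).

Lemma phi_meas : measurable_fun setT (phi a b).
Proof.
have m1 : measurable_fun setT (fun g : H3 R => g.1.1).
  exact: (measurableT_comp measurable_fst measurable_fst).
have m2 : measurable_fun setT (fun g : H3 R => g.1.2).
  exact: (measurableT_comp measurable_snd measurable_fst).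
apply: (@measurable_funB _ _ _ _ (fun g : H3 R => g.1.1 * b)
   (fun g : H3 R => a * g.1.2)).
  exact: (@measurable_funM _ _ _ _ (fun g : H3 R => g.1.1) (cst b)).
exact: (@measurable_funM _ _ _ _ (cst a) (fun g : H3 R => g.1.2)).
Qed.

Lemma quotA t : quot_measurable G (A t).
Proof.
split; first by move=> C [g _ <-]; exists g.
have -> : [set g | A t (lcoset g G)] = phi a b @^-1` `[t, t + 1[.
  apply/seteqP; split => g /=.
  - move=> [g' Ig' e]; rewrite in_itv /=.
    by rewrite -(@lcoset_phi G a b g' g ker (let: And3 h _ _ := sub0 in h) e).
  - by rewrite in_itv /= => Ig; exists g.
rewrite -[X in measurable X]setTI; apply: phi_meas => //.
Qed.

Definition tr (s : R) : H3 R :=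
  (s * b / (a ^+ 2 + b ^+ 2), - (s * a / (a ^+ 2 + b ^+ 2)), 0).

Lemma phi_tr s : phi a b (tr s) = s.
Proof. rewrite /phi /tr /=; field. exact: ab0. Qed.

Lemma imageA t g0 : [set lmul g0 C | C in A t] = A (t + phi a b g0).
Proof.
apply/seteqP; split => C /=.
- move=> [C' [g Ig <-] <-]; rewrite lmul_lcoset; exists (hmul g0 g) => //.
  by move: Ig; rewrite /I /= phiM; lra.
- move=> [h Ih <-]; exists (lcoset (hmul (hinv g0) h) G).
    exists (hmul (hinv g0) h) => //.
    have e : phi a b h = phi a b g0 + phi a b (hmul (hinv g0) h).
      by rewrite -phiM hmul_invK.
    by move: Ih; rewrite /I /= e; lra.
  by rewrite lmul_lcoset hmul_invK.
Qed.


Lemma caseB_neg (mu : probability (odo_type Gam) R) :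
  odometer_measure mu -> mu.-negligible (odo_pt Gam).
Proof.
move=> [Hpt Hinv].
have mP t : measurable (P t : set (odo_type Gam)).
  by apply: sub_sigma_algebra; exists 0%N, (A t); split => //; exact: quotA.
have eqc t : mu (P t) = mu (P 0).
  have := Hinv 0%N (A 0) (tr t) (quotA 0).
  by rewrite imageA phi_tr add0r => ->.
have disj (n m : nat) (x : odo_type Gam) : P n%:R x -> P m%:R x -> n = m.
  move=> [_ [g Ig e]] [_ [g' Ig' e']].
  have := @lcoset_phi G a b g g' ker (let: And3 h _ _ := sub0 in h) (etrans e (esym e')).
  move: Ig Ig' => /andP[h1 h2] /andP[h3 h4] ep.
  rewrite -ep in h3 h4.
  have : (n < m.+1)%N by rewrite -(ltr_nat R) -natr1 (le_lt_trans h1 h4).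
  have : (m < n.+1)%N by rewrite -(ltr_nat R) -natr1 (le_lt_trans h3 h2).
  by rewrite !ltnS => h5 h6; apply/eqP; rewrite eqn_leq h5 h6.
have c0 : mu (P 0) = 0.
  have bnd N : (mu (P 0) *+ N <= 1)%E.
    have mU : measurable (\big[setU/set0]_(i < N) P (i : nat)%:R : set (odo_type Gam)).
      by apply: bigsetU_measurable => i _; exact: mP.
    have := probability_le1 mu mU.
    rewrite (@measure_bigsetU_ord _ _ _ mu N xpredT (fun i : 'I_N => P (i : nat)%:R)).
    - rewrite (eq_bigr (fun=> mu (P 0))); last by move=> i _; exact: eqc.
      by rewrite sumr_const card_ord.
    - by move=> i; exact: mP.
    - move=> i j _ _ [x [h1 h2]]; apply: val_inj; exact: disj h1 h2.
  have c_ge0 : (0 <= mu (P 0))%E by [].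
  have c_le1 : (mu (P 0) <= 1)%E := bnd 1%N.
  have fc : mu (P 0) \is a fin_num by rewrite ge0_fin_numE // (le_lt_trans c_le1) // ltey.
  rewrite -(fineK fc) in bnd c_ge0 *.
  set r := fine (mu (P 0)) in bnd c_ge0 *.
  rewrite lee_fin in c_ge0.
  congr (_%:E); apply/eqP; rewrite eq_le c_ge0 andbT.
  rewrite leNgt; apply/negP => r0.
  have := bnd (Num.truncn r^-1).+1.
  rewrite -EFin_natmul lee_fin -mulr_natr.
  set M := ((Num.truncn r^-1).+1)%:R.
  have h3 : 1 < r * M.
    rewrite -(mulfV (lt0r_neq0 r0)) ltr_pM2l //; exact: truncnS_gt.
  by move=> h1; have := lt_le_trans h3 h1; rewrite ltxx.
have null t : mu.-negligible (P t).
  by apply/negligibleP; [exact: mP| exact: etrans (eqc t) c0].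
apply: (negligibleS _ (negligibleU
  (negligible_bigcup (fun n : nat => null (Posz n)%:~R))
  (negligible_bigcup (fun n : nat => null (Negz n)%:~R)))).
move=> x ox; have [g xg] := ox.1 0%N.
set k := Num.floor (phi a b g).
have hk : P k%:~R x.
  split => //; exists g; last by rewrite xg.
  apply/andP; split; first by rewrite -floor_ge_int.
  have := floor_lt_int (phi a b g) (k + 1).
  by rewrite ltrDl ltr01 intrD => /esym.
by case: k hk => n hk; [left|right]; exists n.
Qed.

End CaseB.

End Aux.

(* Gam 0, Gam 1, ... stand for Gamma_1, Gamma_2, ... *)
Theorem proposition3p4 (R : realType) (Gam : nat -> set (H3 R))
  (Hlat : forall n, lattice (Gam n))
  (Hnest : forall n, Gam n.+1 `<=` Gam n)
  (Hnorm : forall n, normal_in (Gam n) (Gam 0%N)) :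
  (exists mu : probability (odo_type Gam) R,
      odometer_measure mu /\ odo_free mu) ->
  \bigcap_n [set hp g | g in Gam n] = [set ((0 : R), (0 : R))].
Proof.
move=> [mu [Hmu Hfree]].
have sub n : is_subgroup (Gam n) by case: (Hlat n) => [[]].
apply/seteqP; split; last first.
  move=> _ -> n _; exists (hone R) => //.
  by case: (sub n).
move=> [a b] Hab /=.
have [//|ab] := eqVneq (a, b) (0, 0).
exfalso; apply: (@final_contra R Gam mu Hmu).
have ab2 : a ^+ 2 + b ^+ 2 != 0.
  apply/eqP => h; move/eqP: ab; apply.
  have a0 : a = 0 by nra.
  have b0 : b = 0 by nra.
  by rewrite a0 b0.
case: (pselect (exists d, Gam 0%N d /\ phi R a b d != 0)).
- move=> [d [Gd pd]].
  apply: (@caseA R Gam mu (phi R a b d) sub _ pd Hfree) => n.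
  have [g Gg hg] := Hab n I.
  case: (sub n) => _ GM GI.
  have e := @comm_elt R g d (erefl (hp g)).
  move: hg; rewrite /hp => -[ha hb]; rewrite ha hb in e; rewrite -e.
  apply: GM; last exact: GI.
  exact: Hnorm.
- move=> nex; apply: (@caseB_neg R Gam a b (sub 0%N) ab2); last exact: Hmu.
  move=> d Gd; apply/eqP; apply/negP => hd; apply: nex; exists d; split => //.
  exact/negP.
Qed.
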